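(* Let $w_1,w_2,w_3>0$ and let $D$ be the real symmetric $4\times4$ matrix with $D_{i,i+1}=D_{i+1,i}=w_i^{-1}$ for $i=1,2,3$ and all other entries $0$. Let $\lambda=d^D(1,4)$. If $w_2>\sqrt{w_1w_3}$ then $$\lambda=\frac{\sqrt{w_1^2+w_2^2}\,\sqrt{w_3^2+w_2^2}}{w_2},$$ and if $w_2\le\sqrt{w_1w_3}$ then $\lambda=w_1+w_3$.
   Context: For a self-adjoint $n\times n$ matrix $M$, $d^M(i,j)=\sup\{|a(i)-a(j)| : a\in\mathbb{C}^n,\ \|[M,\pi(a)]\|\le 1\}$, where $\pi(a)=\mathrm{diag}(a(1),\dots,a(n))$ and $\|\cdot\|$ is the operator norm. *)

(* Defs.v *)
From HB Require Import structures.
From mathcomp Require Import all_boot all_order all_algebra.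
From mathcomp Require Import all_classical all_reals.
From mathcomp.analysis Require Import ereal.
From mathcomp.real_closed Require Import complex.
Set Implicit Arguments. Unset Strict Implicit. Unset Printing Implicit Defensive.
Import Order.TTheory GRing.Theory Num.Theory.
Local Open Scope ring_scope.
Local Open Scope classical_set_scope.

Section Spectral.
Variable R : realType.
Local Notation C := R[i].

Definition cabs (z : C) : R := Normc.normc z.

Definition vnorm n (x : 'cV[C]_n) : R := Num.sqrt (\sum_(k < n) cabs (x k 0) ^+ 2).

Definition opnorm n (A : 'M[C]_n) : R :=
  sup [set vnorm (A *m x) | x in [set x : 'cV[C]_n | vnorm x <= 1]].

Definition pimx n (a : 'I_n -> C) : 'M[C]_n :=
  \matrix_(i, j) (if i == j then a i else 0).

Definition commx n (M N : 'M[C]_n) : 'M[C]_n := M *m N - N *m M.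

Definition dM n (M : 'M[C]_n) (i j : 'I_n) : \bar R :=
  ereal_sup [set (cabs (a i - a j))%:E |
             a in [set a : 'I_n -> C | opnorm (commx M (pimx a)) <= 1]].

(* the 4x4 path matrix: D_{i,i+1} = D_{i+1,i} = w_i^{-1} (1-based), 0 elsewhere *)
Definition wpath (w1 w2 w3 : R) (k : nat) : R :=
  if k == 0%N then w1^-1 else if k == 1%N then w2^-1 else w3^-1.

Definition pathD (w1 w2 w3 : R) : 'M[C]_4 :=
  \matrix_(i, j)
    (if j == i.+1 :> nat then ((wpath w1 w2 w3 i)%:C)%C
     else if i == j.+1 :> nat then ((wpath w1 w2 w3 j)%:C)%C else 0).

End Spectral.

(* Main.v *)
Require Import Defs.
From HB Require Import structures.
From mathcomp Require Import all_boot all_order all_algebra.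
From mathcomp Require Import all_classical all_reals.
From mathcomp.analysis Require Import ereal.
From mathcomp.real_closed Require Import complex.
From mathcomp Require Import ring lra.
Import Order.TTheory GRing.Theory Num.Theory.
Local Open Scope ring_scope.
Local Open Scope classical_set_scope.
Set Implicit Arguments. Unset Strict Implicit.

Section S.
Variable R : realType.
Local Notation C := R[i].

Lemma cabs_def (z : C) : cabs z = Num.sqrt (complex.Re z ^+ 2 + complex.Im z ^+ 2).
Proof. by case: z. Qed.

Lemma cabsC (z : C) : (cabs z)%:C%C = `|z|.
Proof. by rewrite normc_def cabs_def. Qed.

Lemma cabs_ge0 (z : C) : 0 <= cabs z.
Proof. by rewrite cabs_def sqrtr_ge0. Qed.

Lemma cabs2 (z : C) : cabs z ^+ 2 = complex.Re z ^+ 2 + complex.Im z ^+ 2.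
Proof. by rewrite cabs_def sqr_sqrtr // addr_ge0 // sqr_ge0. Qed.

Lemma cabsD (x y : C) : cabs (x + y) <= cabs x + cabs y.
Proof. by have := ler_normD x y; rewrite -!cabsC -rmorphD lecR. Qed.

Lemma cabsM (x y : C) : cabs (x * y) = cabs x * cabs y.
Proof. exact: Normc.normcM. Qed.

Lemma cabsR (r : R) : cabs (r%:C)%C = `|r|.
Proof. by rewrite cabs_def /= expr0n /= addr0 sqrtr_sqr. Qed.

Lemma cabsN (x : C) : cabs (- x) = cabs x.
Proof. by apply: complexI; rewrite !cabsC normrN. Qed.

Lemma cabs0 : cabs (0 : C) = 0.
Proof. by rewrite cabs_def /= expr0n /= addr0 sqrtr0. Qed.

Lemma cabs_sum n (F : 'I_n -> C) : cabs (\sum_i F i) <= \sum_i cabs (F i).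
Proof.
apply: (big_ind2 (fun a b => cabs a <= b)); first by rewrite cabs0.
  by move=> x1 x2 y1 y2 h1 h2; apply: le_trans (cabsD _ _) (lerD h1 h2).
by [].
Qed.


Lemma vnorm_le1 n (x : 'cV[C]_n) :
  (vnorm x <= 1) = (\sum_k cabs (x k 0) ^+ 2 <= 1).
Proof. by rewrite /vnorm -{1}sqrtr1 ler_sqrt. Qed.

Lemma vnorm_entry n (x : 'cV[C]_n) j : vnorm x <= 1 -> cabs (x j 0) <= 1.
Proof.
rewrite vnorm_le1 (bigD1 j) //= => h.
have h0 : 0 <= \sum_(k | k != j) cabs (x k 0) ^+ 2.
  by apply: sumr_ge0 => k _; rewrite sqr_ge0.
have h1 := cabs_ge0 (x j 0).
nra.
Qed.

Lemma opnorm_bound n (A : 'M[C]_n) : exists B, forall x : 'cV[C]_n,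
  vnorm x <= 1 -> vnorm (A *m x) <= B.
Proof.
exists (Num.sqrt (\sum_k (\sum_j cabs (A k j)) ^+ 2)) => x hx.
rewrite /vnorm ler_sqrt; last by apply: sumr_ge0 => k _; rewrite sqr_ge0.
apply: ler_sum => k _.
have h : cabs ((A *m x) k 0) <= \sum_j cabs (A k j).
  rewrite mxE; apply: le_trans; first exact: cabs_sum.
  apply: ler_sum => j _; rewrite cabsM.
  have := vnorm_entry j hx; have := cabs_ge0 (A k j); have := cabs_ge0 (x j 0).
  nra.
have := cabs_ge0 ((A *m x) k 0); nra.
Qed.

Lemma opnorm_le1P n (A : 'M[C]_n) : opnorm A <= 1 ->
  forall x : 'cV[C]_n, vnorm x <= 1 -> vnorm (A *m x) <= 1.
Proof.
move=> hA x hx; apply: le_trans _ hA.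
apply: sup_upper_bound; last by exists x.
split; first by exists (vnorm (A *m x)), x.
have [B hB] := opnorm_bound A.
by exists B => _ [y hy <-]; apply: hB.
Qed.

Lemma vnorm0 n : vnorm (0 : 'cV[C]_n) = 0.
Proof.
rewrite /vnorm big1 ?sqrtr0 // => k _.
by rewrite mxE cabs0 expr0n.
Qed.

Lemma opnorm_le1 n (A : 'M[C]_n) :
  (forall x : 'cV[C]_n, vnorm x <= 1 -> vnorm (A *m x) <= 1) -> opnorm A <= 1.
Proof.
move=> h; apply: ge_sup.
  by exists (vnorm (A *m 0)), 0 => //=; rewrite vnorm0 ler01.
by move=> _ [y hy <-]; apply: h.
Qed.

Lemma sq_le (t s : R) : 0 <= s -> t ^+ 2 <= s ^+ 2 -> t <= s.
Proof. move=> hs h; nra. Qed.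

Lemma L1 (w1 w2 w3 n1 n3 X Y : R) : 0 < w1 -> 0 < w2 -> 0 < w3 -> 0 < n1 -> 0 < n3 ->
  n1 ^+ 2 = w1 ^+ 2 + w2 ^+ 2 -> n3 ^+ 2 = w3 ^+ 2 + w2 ^+ 2 -> 0 <= X -> 0 <= Y ->
  (w2 / (w1 * n3) * X) ^+ 2 + (n3^-1 * Y) ^+ 2 <= 1 -> X + Y <= n1 * n3 / w2.
Proof.
move=> h1 h2 h3 hn1 hn3 e1 e3 hX hY h.
set u := w2 * X / w1.
have eu : X * w2 = u * w1 by rewrite /u; field; lra.
have hu : u ^+ 2 + Y ^+ 2 <= n3 ^+ 2.
  have : (u ^+ 2 + Y ^+ 2) / n3 ^+ 2 <= 1.
    move: h; have -> : (w2 / (w1 * n3) * X) ^+ 2 + (n3^-1 * Y) ^+ 2 = (u ^+ 2 + Y ^+ 2) / n3 ^+ 2.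
      by rewrite /u; field; lra.
    by [].
  by rewrite ler_pdivrMr ?exprn_gt0 // mul1r.
rewrite ler_pdivlMr //; apply: sq_le; first by apply: mulr_ge0; lra.
have -> : (X + Y) * w2 = w1 * u + w2 * Y by rewrite mulrDl eu; ring.
rewrite exprMn e1.
have : 0 <= (w1 * Y - w2 * u) ^+ 2 by apply: sqr_ge0.
have : 0 <= w1 ^+ 2 + w2 ^+ 2 by nra.
nra.
Qed.

Lemma L2 (w1 w2 w3 n1 U V : R) : 0 < w1 -> 0 < w2 -> 0 < w3 -> 0 < n1 ->
  n1 ^+ 2 = w1 ^+ 2 + w2 ^+ 2 -> w2 ^+ 2 <= w1 * w3 -> 0 <= U -> 0 <= V -> V <= w3 ->
  (n1^-1 * U) ^+ 2 + (w2 / (w3 * n1) * V) ^+ 2 <= 1 -> U + V <= w1 + w3.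
Proof.
move=> h1 h2 h3 hn1 e1 hw hU hV hV3 h.
set t := V / w3.
have eV : V = t * w3 by rewrite /t; field; lra.
have ht0 : 0 <= t by rewrite /t divr_ge0 //; lra.
have ht1 : t <= 1 by rewrite /t ler_pdivrMr // mul1r.
have hUU : U ^+ 2 + w2 ^+ 2 * t ^+ 2 <= n1 ^+ 2.
  have : (U ^+ 2 + w2 ^+ 2 * t ^+ 2) / n1 ^+ 2 <= 1.
    move: h; have -> : (n1^-1 * U) ^+ 2 + (w2 / (w3 * n1) * V) ^+ 2 = (U ^+ 2 + w2 ^+ 2 * t ^+ 2) / n1 ^+ 2.
      by rewrite eV; field; lra.
    by [].
  by rewrite ler_pdivrMr ?exprn_gt0 // mul1r.
rewrite e1 in hUU.
rewrite eV.
have hw' : w2 ^+ 2 * (1 - t) * (1 + t) <= 2 * w1 * w3 * (1 - t) + w3 ^+ 2 * (1 - t) ^+ 2.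
  have h1t : 0 <= (1 - t) * (1 + t) by apply: mulr_ge0; lra.
  have k1 : 0 <= (w1 * w3 - w2 ^+ 2) * ((1 - t) * (1 + t)) by apply: mulr_ge0; lra.
  have w13 : 0 <= w1 * w3 by apply: mulr_ge0; lra.
  have k2 : 0 <= (w1 * w3) * ((1 - t) * (1 - t)) by apply: mulr_ge0 => //; nra.
  have k3 : 0 <= w3 ^+ 2 * (1 - t) ^+ 2 by nra.
  nra.
have hUsq : U ^+ 2 <= (w1 + w3 * (1 - t)) ^+ 2.
  have -> : (w1 + w3 * (1 - t)) ^+ 2 = w1 ^+ 2 + (2 * w1 * w3 * (1 - t) + w3 ^+ 2 * (1 - t) ^+ 2) by ring.
  have e : w2 ^+ 2 * (1 - t) * (1 + t) = w2 ^+ 2 - w2 ^+ 2 * t ^+ 2 by ring.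
  lra.
have := sq_le (t := U) (s := w1 + w3 * (1 - t)).
have : 0 <= w3 * (1 - t) by apply: mulr_ge0; lra.
move=> h0 /(_ _ hUsq); lra.
Qed.

Lemma psd2 (p q b u v : R) : 0 <= p -> 0 <= q -> b ^+ 2 <= p * q ->
  0 <= p * u ^+ 2 + 2 * b * u * v + q * v ^+ 2.
Proof.
move=> hp hq.
have [->|hp0] := eqVneq p 0.
  rewrite mul0r => hb.
  have hb0 : b ^+ 2 = 0 by apply/eqP; rewrite eq_le hb sqr_ge0.
  move/eqP: hb0; rewrite sqrf_eq0 => /eqP ->.
  rewrite !(mul0r, mulr0, add0r); apply: mulr_ge0 => //; apply: sqr_ge0.
move=> hb; have hp' : 0 < p by rewrite lt_def hp0.
have : 0 <= p * (p * u ^+ 2 + 2 * b * u * v + q * v ^+ 2).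
  have -> : p * (p * u ^+ 2 + 2 * b * u * v + q * v ^+ 2) =
    (p * u + b * v) ^+ 2 + (p * q - b ^+ 2) * v ^+ 2 by ring.
  by apply: addr_ge0; [apply: sqr_ge0 | apply: mulr_ge0; [lra | apply: sqr_ge0]].
by rewrite pmulr_rge0.
Qed.

Definition Dl (b1 b2 b3 : R) := 1 - b1 ^+ 2 - b2 ^+ 2 - b3 ^+ 2 + b1 ^+ 2 * b3 ^+ 2.

Lemma blk_even (b1 b2 b3 u v : R) : 0 <= 1 - b1 ^+ 2 -> 0 <= 1 - b3 ^+ 2 -> 0 <= Dl b1 b2 b3 ->
  (- b1 * u + b2 * v) ^+ 2 + (b3 * v) ^+ 2 <= u ^+ 2 + v ^+ 2.
Proof.
rewrite /Dl => h1 h3 hD.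
have := @psd2 (1 - b1 ^+ 2) (1 - b2 ^+ 2 - b3 ^+ 2) (b1 * b2) u v h1.
have hq : 0 <= 1 - b2 ^+ 2 - b3 ^+ 2 by nra.
move=> /(_ hq) H.
have : (b1 * b2) ^+ 2 <= (1 - b1 ^+ 2) * (1 - b2 ^+ 2 - b3 ^+ 2) by nra.
move=> /H H2; rewrite -subr_ge0.
have -> : u ^+ 2 + v ^+ 2 - ((- b1 * u + b2 * v) ^+ 2 + (b3 * v) ^+ 2) =
  (1 - b1 ^+ 2) * u ^+ 2 + 2 * (b1 * b2) * u * v + (1 - b2 ^+ 2 - b3 ^+ 2) * v ^+ 2 by ring.
exact: H2.
Qed.

Lemma blk_odd (b1 b2 b3 u v : R) : 0 <= 1 - b1 ^+ 2 -> 0 <= 1 - b3 ^+ 2 -> 0 <= Dl b1 b2 b3 ->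
  (b1 * u) ^+ 2 + (- b2 * u + b3 * v) ^+ 2 <= u ^+ 2 + v ^+ 2.
Proof.
rewrite /Dl => h1 h3 hD.
have := @psd2 (1 - b1 ^+ 2 - b2 ^+ 2) (1 - b3 ^+ 2) (b2 * b3) u v.
have hp : 0 <= 1 - b1 ^+ 2 - b2 ^+ 2 by nra.
move=> /(_ hp h3) H.
have : (b2 * b3) ^+ 2 <= (1 - b1 ^+ 2 - b2 ^+ 2) * (1 - b3 ^+ 2) by nra.
move=> /H H2; rewrite -subr_ge0.
have -> : u ^+ 2 + v ^+ 2 - ((b1 * u) ^+ 2 + (- b2 * u + b3 * v) ^+ 2) =
  (1 - b1 ^+ 2 - b2 ^+ 2) * u ^+ 2 + 2 * (b2 * b3) * u * v + (1 - b3 ^+ 2) * v ^+ 2 by ring.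
exact: H2.
Qed.

Lemma case1_b (w1 w2 w3 n1 n3 : R) : 0 < w1 -> 0 < w2 -> 0 < w3 -> 0 < n1 -> 0 < n3 ->
  n1 ^+ 2 = w1 ^+ 2 + w2 ^+ 2 -> n3 ^+ 2 = w3 ^+ 2 + w2 ^+ 2 -> w1 * w3 < w2 ^+ 2 ->
  let b1 := w1 * n3 / (w2 * n1) in let b3 := w3 * n1 / (w2 * n3) in
  let b2 := (w2 ^+ 4 - w1 ^+ 2 * w3 ^+ 2) / (w2 ^+ 2 * n1 * n3) in
  [/\ 0 <= 1 - b1 ^+ 2, 0 <= 1 - b3 ^+ 2, 0 <= Dl b1 b2 b3 &
      w1 * b1 + w2 * b2 + w3 * b3 = n1 * n3 / w2].
Proof.
move=> h1 h2 h3 hn1 hn3 e1 e3 hw b1 b3 b2.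
have n1P : n1 != 0 by rewrite gt_eqF.
have n3P : n3 != 0 by rewrite gt_eqF.
have w1P : w1 != 0 by rewrite gt_eqF.
have w2P : w2 != 0 by rewrite gt_eqF.
have w3P : w3 != 0 by rewrite gt_eqF.
have s1P : w1 ^+ 2 + w2 ^+ 2 != 0 by rewrite gt_eqF // ltr_wpDl ?sqr_ge0 // exprn_gt0.
have s3P : w3 ^+ 2 + w2 ^+ 2 != 0 by rewrite gt_eqF // ltr_wpDl ?sqr_ge0 // exprn_gt0.
have eb1 : b1 ^+ 2 = w1 ^+ 2 * (w3 ^+ 2 + w2 ^+ 2) / (w2 ^+ 2 * (w1 ^+ 2 + w2 ^+ 2)).
  by rewrite /b1 expr_div_n !exprMn e1 e3.
have eb3 : b3 ^+ 2 = w3 ^+ 2 * (w1 ^+ 2 + w2 ^+ 2) / (w2 ^+ 2 * (w3 ^+ 2 + w2 ^+ 2)).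
  by rewrite /b3 expr_div_n !exprMn e1 e3.
have eb2 : b2 ^+ 2 = (w2 ^+ 4 - w1 ^+ 2 * w3 ^+ 2) ^+ 2 /
    (w2 ^+ 4 * (w1 ^+ 2 + w2 ^+ 2) * (w3 ^+ 2 + w2 ^+ 2)).
  by rewrite /b2 expr_div_n !exprMn e1 e3 -exprD.
have hk : 0 <= w2 ^+ 4 - w1 ^+ 2 * w3 ^+ 2.
  have -> : w2 ^+ 4 - w1 ^+ 2 * w3 ^+ 2 = (w2 ^+ 2 - w1 * w3) * (w2 ^+ 2 + w1 * w3) by ring.
  apply: mulr_ge0; first lra.
  have : 0 < w1 * w3 by apply: mulr_gt0.
  have := sqr_ge0 w2; lra.
split.
- have -> : 1 - b1 ^+ 2 = (w2 ^+ 4 - w1 ^+ 2 * w3 ^+ 2) / (w2 ^+ 2 * (w1 ^+ 2 + w2 ^+ 2)).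
    by rewrite eb1; field; rewrite w2P s1P.
  apply: divr_ge0 => //; apply: mulr_ge0; first exact: sqr_ge0.
  by apply: addr_ge0; apply: sqr_ge0.
- have -> : 1 - b3 ^+ 2 = (w2 ^+ 4 - w1 ^+ 2 * w3 ^+ 2) / (w2 ^+ 2 * (w3 ^+ 2 + w2 ^+ 2)).
    by rewrite eb3; field; rewrite w2P s3P.
  apply: divr_ge0 => //; apply: mulr_ge0; first exact: sqr_ge0.
  by apply: addr_ge0; apply: sqr_ge0.
- have -> : Dl b1 b2 b3 = 0.
    by rewrite /Dl eb1 eb2 eb3; field; rewrite w2P s1P s3P.
  by [].
- have -> : w1 * b1 + w2 * b2 + w3 * b3 =
    (w1 ^+ 2 * n3 ^+ 2 + w3 ^+ 2 * n1 ^+ 2 + w2 ^+ 4 - w1 ^+ 2 * w3 ^+ 2) / (w2 * n1 * n3).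
    by rewrite /b1 /b2 /b3; field; rewrite n1P n3P w2P.
  have -> : n1 * n3 / w2 = (n1 ^+ 2 * n3 ^+ 2) / (w2 * n1 * n3).
    by field; rewrite n1P n3P w2P.
  by rewrite e1 e3; congr (_ / _); ring.
Qed.


Definition o0 : 'I_4 := @Ordinal 4 0 isT.
Definition o1 : 'I_4 := @Ordinal 4 1 isT.
Definition o2 : 'I_4 := @Ordinal 4 2 isT.
Definition o3 : 'I_4 := @Ordinal 4 3 isT.

Lemma sum4 (V : nmodType) (F : 'I_4 -> V) : \sum_j F j = F o0 + F o1 + F o2 + F o3.
Proof.
rewrite !big_ord_recl big_ord0 addr0 !addrA.
have e0 : ord0 = o0 by apply: val_inj.
have e1 : lift ord0 ord0 = o1 by apply: val_inj.
have e2 : lift ord0 (lift ord0 ord0) = o2 by apply: val_inj.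
have e3 : lift ord0 (lift ord0 (lift ord0 ord0)) = o3 :> 'I_4 by apply: val_inj.
by rewrite e3 e2 e1 e0.
Qed.

Definition mk4 (c0 c1 c2 c3 : C) : 'cV[C]_4 := \col_(i < 4) nth 0 [:: c0; c1; c2; c3] i.

Lemma mk4E c0 c1 c2 c3 : (mk4 c0 c1 c2 c3 o0 0 = c0) * (mk4 c0 c1 c2 c3 o1 0 = c1) *
  (mk4 c0 c1 c2 c3 o2 0 = c2) * (mk4 c0 c1 c2 c3 o3 0 = c3).
Proof. by rewrite !mxE. Qed.

Lemma vnorm_mk4 c0 c1 c2 c3 : (vnorm (mk4 c0 c1 c2 c3) <= 1) =
  (cabs c0 ^+ 2 + cabs c1 ^+ 2 + cabs c2 ^+ 2 + cabs c3 ^+ 2 <= 1).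
Proof. by rewrite vnorm_le1 sum4 !mxE. Qed.

Lemma mulmx_pimx n (M : 'M[C]_n) a i j : (M *m pimx a) i j = M i j * a j.
Proof.
rewrite mxE (bigD1 j) //= big1 ?addr0; first by rewrite mxE eqxx.
by move=> k hk; rewrite mxE (negbTE hk) mulr0.
Qed.

Lemma pimx_mulmx n (M : 'M[C]_n) a i j : (pimx a *m M) i j = a i * M i j.
Proof.
rewrite mxE (bigD1 i) //= big1 ?addr0; first by rewrite mxE eqxx.
by move=> k hk; rewrite mxE eq_sym (negbTE hk) mul0r.
Qed.

Lemma commxE n (M : 'M[C]_n) a i j : commx M (pimx a) i j = M i j * (a j - a i).
Proof.
rewrite /commx.
have -> : (M *m pimx a - pimx a *m M) i j = (M *m pimx a) i j - (pimx a *m M) i j.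
  by rewrite !mxE.
by rewrite mulmx_pimx pimx_mulmx mulrBr [a i * _]mulrC.
Qed.

Section Path.
Variables w1 w2 w3 : R.
Variable a : 'I_4 -> C.
Let A := commx (pathD w1 w2 w3) (pimx a).
Let d1 := (w1^-1)%:C%C.
Let d2 := (w2^-1)%:C%C.
Let d3 := (w3^-1)%:C%C.

Lemma Ax0 (x : 'cV[C]_4) : (A *m x) o0 0 = d1 * (a o1 - a o0) * x o1 0.
Proof. by rewrite mxE sum4 !commxE !mxE /= /wpath /=; ring. Qed.
Lemma Ax1 (x : 'cV[C]_4) : (A *m x) o1 0 =
  d1 * (a o0 - a o1) * x o0 0 + d2 * (a o2 - a o1) * x o2 0.
Proof. by rewrite mxE sum4 !commxE !mxE /= /wpath /=; ring. Qed.
Lemma Ax2 (x : 'cV[C]_4) : (A *m x) o2 0 =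
  d2 * (a o1 - a o2) * x o1 0 + d3 * (a o3 - a o2) * x o3 0.
Proof. by rewrite mxE sum4 !commxE !mxE /= /wpath /=; ring. Qed.
Lemma Ax3 (x : 'cV[C]_4) : (A *m x) o3 0 = d3 * (a o2 - a o3) * x o2 0.
Proof. by rewrite mxE sum4 !commxE !mxE /= /wpath /=; ring. Qed.

Lemma vnormA (x : 'cV[C]_4) : (vnorm (A *m x) <= 1) =
  (cabs (d1 * (a o1 - a o0) * x o1 0) ^+ 2
   + cabs (d1 * (a o0 - a o1) * x o0 0 + d2 * (a o2 - a o1) * x o2 0) ^+ 2
   + cabs (d2 * (a o1 - a o2) * x o1 0 + d3 * (a o3 - a o2) * x o3 0) ^+ 2
   + cabs (d3 * (a o2 - a o3) * x o2 0) ^+ 2 <= 1).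
Proof. by rewrite vnorm_le1 sum4 Ax0 Ax1 Ax2 Ax3. Qed.
End Path.


Lemma pos_sqrt (x y : R) : 0 < x -> 0 < Num.sqrt (x ^+ 2 + y ^+ 2).
Proof. by move=> hx; rewrite sqrtr_gt0 ltr_wpDr ?sqr_ge0 // exprn_gt0. Qed.

Lemma sq_sqrt (x y : R) : Num.sqrt (x ^+ 2 + y ^+ 2) ^+ 2 = x ^+ 2 + y ^+ 2.
Proof. by rewrite sqr_sqrtr // addr_ge0 // sqr_ge0. Qed.

Lemma normK2 (x : R) : `|x| ^+ 2 = x ^+ 2.
Proof. exact: real_normK (num_real x). Qed.

Lemma cabs2R (r : R) (z : C) : cabs ((r%:C)%C * z) ^+ 2 = (r * cabs z) ^+ 2.
Proof. by rewrite cabsM cabsR exprMn normK2 exprMn. Qed.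

Lemma ub1 (w1 w2 w3 : R) (a : 'I_4 -> C) : 0 < w1 -> 0 < w2 -> 0 < w3 ->
  opnorm (commx (pathD w1 w2 w3) (pimx a)) <= 1 ->
  cabs (a o0 - a o3) <= Num.sqrt (w1 ^+ 2 + w2 ^+ 2) * Num.sqrt (w3 ^+ 2 + w2 ^+ 2) / w2.
Proof.
move=> h1 h2 h3 hA.
set n1 := Num.sqrt (w1 ^+ 2 + w2 ^+ 2); set n3 := Num.sqrt (w3 ^+ 2 + w2 ^+ 2).
have hn1 : 0 < n1 by apply: pos_sqrt.
have hn3 : 0 < n3 by apply: pos_sqrt.
have e1 : n1 ^+ 2 = w1 ^+ 2 + w2 ^+ 2 by apply: sq_sqrt.
have e3 : n3 ^+ 2 = w3 ^+ 2 + w2 ^+ 2 by apply: sq_sqrt.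
have w1P : w1 != 0 by rewrite gt_eqF.
have w2P : w2 != 0 by rewrite gt_eqF.
have w3P : w3 != 0 by rewrite gt_eqF.
have n3P : n3 != 0 by rewrite gt_eqF.
have := opnorm_le1P hA (x := mk4 0 (w2 / n3)%:C%C 0 (- (w3 / n3))%:C%C).
rewrite vnorm_mk4 vnormA !mk4E.
have E0 : (w1^-1)%:C%C * (a o1 - a o0) * (w2 / n3)%:C%C = (w2 / (w1 * n3))%:C%C * (a o1 - a o0).
  by field; rewrite !fmorph_eq0 => //; repeat (apply/andP; split) => //.
have E2 : (w2^-1)%:C%C * (a o1 - a o2) * (w2 / n3)%:C%C + (w3^-1)%:C%C * (a o3 - a o2) * (- (w3 / n3))%:C%C
  = (n3^-1)%:C%C * (a o1 - a o3).
  by field; rewrite !fmorph_eq0 => //; repeat (apply/andP; split) => //.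
rewrite E0 E2 !mulr0 !addr0 !cabs0 !cabsR !normK2 expr0n /= !add0r addr0.
move=> H.
have hy : (w2 / n3) ^+ 2 + (- (w3 / n3)) ^+ 2 <= 1.
  rewrite sqrrN !expr_div_n -mulrDl [w2 ^+ 2 + _]addrC -e3 divff //.
  by rewrite expf_neq0.
have := H hy; rewrite !cabs2R !addr0 => H'.
have := L1 h1 h2 h3 hn1 hn3 e1 e3 (cabs_ge0 _) (cabs_ge0 _) H'.
apply: le_trans.
have -> : a o0 - a o3 = - (a o1 - a o0) + (a o1 - a o3) by ring.
by apply: le_trans (cabsD _ _) _; rewrite cabsN.
Qed.

Lemma cabs1 : cabs (1 : C) = 1.
Proof. exact: Normc.normc1. Qed.

Lemma ub2 (w1 w2 w3 : R) (a : 'I_4 -> C) : 0 < w1 -> 0 < w2 -> 0 < w3 ->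
  w2 ^+ 2 <= w1 * w3 ->
  opnorm (commx (pathD w1 w2 w3) (pimx a)) <= 1 ->
  cabs (a o0 - a o3) <= w1 + w3.
Proof.
move=> h1 h2 h3 hw hA.
set n1 := Num.sqrt (w1 ^+ 2 + w2 ^+ 2).
have hn1 : 0 < n1 by apply: pos_sqrt.
have e1 : n1 ^+ 2 = w1 ^+ 2 + w2 ^+ 2 by apply: sq_sqrt.
have w1P : w1 != 0 by rewrite gt_eqF.
have w2P : w2 != 0 by rewrite gt_eqF.
have w3P : w3 != 0 by rewrite gt_eqF.
have n1P : n1 != 0 by rewrite gt_eqF.
have hV : cabs (a o2 - a o3) <= w3.
  have := opnorm_le1P hA (x := mk4 0 0 1 0).
  rewrite vnorm_mk4 vnormA !mk4E !mulr0 !addr0 !mulr1 !add0r cabs0 cabs1 expr0n expr1n /= !add0r.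
  rewrite addr0 => /(_ (lexx _)); rewrite !cabs2R addr0 => H.
  have H2 : (w3^-1 * cabs (a o2 - a o3)) ^+ 2 <= 1.
    by apply: le_trans H; rewrite lerDr sqr_ge0.
  have : w3^-1 * cabs (a o2 - a o3) <= 1 by apply: sq_le => //; rewrite expr1n.
  by rewrite mulrC ler_pdivrMr // mul1r.
have := opnorm_le1P hA (x := mk4 (w1 / n1)%:C%C 0 (- (w2 / n1))%:C%C 0).
rewrite vnorm_mk4 vnormA !mk4E.
have E1 : (w1^-1)%:C%C * (a o0 - a o1) * (w1 / n1)%:C%C + (w2^-1)%:C%C * (a o2 - a o1) * (- (w2 / n1))%:C%C
  = (n1^-1)%:C%C * (a o0 - a o2).
  by field; rewrite !fmorph_eq0 => //; repeat (apply/andP; split) => //.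
have E3 : (w3^-1)%:C%C * (a o2 - a o3) * (- (w2 / n1))%:C%C = (- (w2 / (w3 * n1)))%:C%C * (a o2 - a o3).
  by field; rewrite !fmorph_eq0 => //; repeat (apply/andP; split) => //.
rewrite E1 E3 !mulr0 !addr0 !cabs0 !cabsR !normK2 expr0n /= !add0r addr0.
move=> H.
have hy : (w1 / n1) ^+ 2 + (- (w2 / n1)) ^+ 2 <= 1.
  rewrite sqrrN !expr_div_n -mulrDl -e1 divff //.
  by rewrite expf_neq0.
move: H; rewrite !addr0 => /(_ hy); rewrite !cabs2R mulNr sqrrN => H'.
have := L2 h1 h2 h3 hn1 e1 hw (cabs_ge0 _) (cabs_ge0 _) hV H'.
apply: le_trans.
have -> : a o0 - a o3 = (a o0 - a o2) + (a o2 - a o3) by ring.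
exact: cabsD.
Qed.

Lemma cabs_lin2 (r s : R) (z w : C) : cabs ((r%:C)%C * z + (s%:C)%C * w) ^+ 2 =
  (r * complex.Re z + s * complex.Re w) ^+ 2 + (r * complex.Im z + s * complex.Im w) ^+ 2.
Proof. by case: z w => p q [p' q']; rewrite cabs2 /=; ring. Qed.

Lemma cabs_lin1 (r : R) (z : C) : cabs ((r%:C)%C * z) ^+ 2 =
  (r * complex.Re z) ^+ 2 + (r * complex.Im z) ^+ 2.
Proof. by case: z => p q; rewrite cabs2 /=; ring. Qed.

Definition aseq (w1 w2 w3 b1 b2 b3 : R) (i : 'I_4) : C :=
  ((nth 0 [:: 0; w1 * b1; w1 * b1 + w2 * b2; w1 * b1 + w2 * b2 + w3 * b3] (val i))%:C)%C.

Lemma lb (w1 w2 w3 b1 b2 b3 : R) : 0 < w1 -> 0 < w2 -> 0 < w3 ->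
  0 <= 1 - b1 ^+ 2 -> 0 <= 1 - b3 ^+ 2 -> 0 <= Dl b1 b2 b3 ->
  (opnorm (commx (pathD w1 w2 w3) (pimx (aseq w1 w2 w3 b1 b2 b3))) <= 1) /\ 
  (cabs (aseq w1 w2 w3 b1 b2 b3 o0 - aseq w1 w2 w3 b1 b2 b3 o3) = Num.norm (w1 * b1 + w2 * b2 + w3 * b3)).
Proof.
move=> h1 h2 h3 k1 k3 kD.
have w1P : w1 != 0 by rewrite gt_eqF.
have w2P : w2 != 0 by rewrite gt_eqF.
have w3P : w3 != 0 by rewrite gt_eqF.
set a := aseq w1 w2 w3 b1 b2 b3.
have ea0 : a o0 = 0 by [].
have ea1 : a o1 = ((w1 * b1)%:C)%C by [].
have ea2 : a o2 = ((w1 * b1 + w2 * b2)%:C)%C by [].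
have ea3 : a o3 = ((w1 * b1 + w2 * b2 + w3 * b3)%:C)%C by [].
split; last first.
  by rewrite ea0 ea3 sub0r cabsN cabsR.
apply: opnorm_le1 => x.
rewrite vnorm_le1 sum4 !cabs2 vnormA ea0 ea1 ea2 ea3.
have -> : (w1^-1)%:C%C * ((w1 * b1)%:C%C - 0) = b1%:C%C.
  by field; rewrite !fmorph_eq0.
have -> : (w1^-1)%:C%C * (0 - (w1 * b1)%:C%C) = (- b1)%:C%C.
  by field; rewrite !fmorph_eq0.
have -> : (w2^-1)%:C%C * ((w1 * b1 + w2 * b2)%:C%C - (w1 * b1)%:C%C) = b2%:C%C.
  by field; rewrite !fmorph_eq0.
have -> : (w2^-1)%:C%C * ((w1 * b1)%:C%C - (w1 * b1 + w2 * b2)%:C%C) = (- b2)%:C%C.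
  by field; rewrite !fmorph_eq0.
have -> : (w3^-1)%:C%C * ((w1 * b1 + w2 * b2 + w3 * b3)%:C%C - (w1 * b1 + w2 * b2)%:C%C) = b3%:C%C.
  by field; rewrite !fmorph_eq0.
have -> : (w3^-1)%:C%C * ((w1 * b1 + w2 * b2)%:C%C - (w1 * b1 + w2 * b2 + w3 * b3)%:C%C) = (- b3)%:C%C.
  by field; rewrite !fmorph_eq0.
rewrite !cabs_lin2 !cabs_lin1.
set p0 := complex.Re (x o0 0); set p1 := complex.Re (x o1 0).
set p2 := complex.Re (x o2 0); set p3 := complex.Re (x o3 0).
set q0 := complex.Im (x o0 0); set q1 := complex.Im (x o1 0).
set q2 := complex.Im (x o2 0); set q3 := complex.Im (x o3 0).
move=> hx.
have Ep := blk_even p0 p2 k1 k3 kD.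
have Eq := blk_even q0 q2 k1 k3 kD.
have Op := blk_odd p1 p3 k1 k3 kD.
have Oq := blk_odd q1 q3 k1 k3 kD.
rewrite !mulNr !sqrrN.
lra.
Qed.

End S.

Unset Implicit Arguments.
Local Close Scope classical_set_scope.

Theorem mainTheorem5 (R : realType) (w1 w2 w3 : R)
  (hw1 : 0 < w1) (hw2 : 0 < w2) (hw3 : 0 < w3) :
  (Num.sqrt (w1 * w3) < w2 ->
     dM (pathD w1 w2 w3) (inord 0) (inord 3) =
     (Num.sqrt (w1 ^+ 2 + w2 ^+ 2) * Num.sqrt (w3 ^+ 2 + w2 ^+ 2) / w2)%:E) /\
  (w2 <= Num.sqrt (w1 * w3) ->
     dM (pathD w1 w2 w3) (inord 0) (inord 3) = (w1 + w3)%:E).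
Proof.
have i0 : (inord 0 : 'I_4) = o0 by apply: val_inj; rewrite /= inordK.
have i3 : (inord 3 : 'I_4) = o3 by apply: val_inj; rewrite /= inordK.
rewrite /dM i0 i3.
have w13 : 0 <= w1 * w3 by apply: mulr_ge0; apply: ltW.
have es : Num.sqrt (w1 * w3) ^+ 2 = w1 * w3 by rewrite sqr_sqrtr.
have hs0 := sqrtr_ge0 (w1 * w3).
split => hc.
- have hw : w1 * w3 < w2 ^+ 2 by rewrite -es; nra.
  set n1 := Num.sqrt (w1 ^+ 2 + w2 ^+ 2); set n3 := Num.sqrt (w3 ^+ 2 + w2 ^+ 2).
  have hn1 : 0 < n1 by apply: pos_sqrt.
  have hn3 : 0 < n3 by apply: pos_sqrt.
  have e1 : n1 ^+ 2 = w1 ^+ 2 + w2 ^+ 2 by apply: sq_sqrt.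
  have e3 : n3 ^+ 2 = w3 ^+ 2 + w2 ^+ 2 by apply: sq_sqrt.
  apply/le_anti/andP; split.
    apply: ge_ereal_sup => _ [a ha <-]; rewrite lee_fin; exact: ub1.
  have [k1 k3 kD ev] := case1_b hw1 hw2 hw3 hn1 hn3 e1 e3 hw.
  have [hA hv] := lb hw1 hw2 hw3 k1 k3 kD.
  apply: ereal_sup_ubound; eexists; first exact: hA.
  rewrite hv ev ger0_norm //.
  by apply: divr_ge0; [apply: mulr_ge0; apply: ltW | apply: ltW].
- have hw : w2 ^+ 2 <= w1 * w3 by rewrite -es; nra.
  apply/le_anti/andP; split.
    apply: ge_ereal_sup => _ [a ha <-]; rewrite lee_fin; exact: (ub2 hw1 hw2 hw3 hw ha).
  have k1 : 0 <= 1 - 1 ^+ 2 :> R by rewrite expr1n subrr.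
  have kD : 0 <= Dl 1 0 1 :> R by rewrite /Dl expr1n expr0n /=; lra.
  have [hA hv] := lb hw1 hw2 hw3 k1 k1 kD.
  apply: ereal_sup_ubound; eexists; first exact: hA.
  rewrite hv !mulr1 mulr0 addr0 ger0_norm //.
  by apply: addr_ge0; apply: ltW.
Qed.
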